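(* Let $L\in\mathbb N$, ${\bf A}\in\mathbb R^{M\times N}$, ${\bf b}\in\mathbb R^M$, and let ${\bf x}$ follow the gradient flow $\partial_t{\bf x}=-\nabla\mathcal L({\bf x})$, ${\bf x}(0)={\bf x}_0$, with ${\bf x}_0>0$ (entrywise) and ${\bf x}(t)>0$ for all $t\ge 0$ (when $L\neq 2$ and $2-L<0$; for $L=2$ positivity is needed for the logarithm). Then the quantity $$h_0(t):=(I-{\bf A}^\dagger{\bf A})\cdot\begin{cases}\log({\bf x}(t)) & L=2,\\ {\bf x}(t)^{\odot(2-L)} & L\neq2\end{cases}$$ is the same for all $t\ge0$.
   Context: $\odot$ denotes entrywise product/power, $\log$ acts entrywise, vector inequalities are entrywise; ${\bf A}^\dagger$ is the Moore–Penrose pseudoinverse. Loss: $\mathcal L({\bf x})=\frac{1}{2L}\|{\bf A}{\bf x}^{\odot L}-{\bf b}\|_2^2$, with $\nabla\mathcal L({\bf x})=[{\bf A}^\top({\bf A}{\bf x}^{\odot L}-{\bf b})]\odot{\bf x}^{\odot(L-1)}$. *)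

(* Defs.v *)
From HB Require Import structures.
From mathcomp Require Import all_boot all_order all_algebra.
From mathcomp Require Import all_classical all_reals all_analysis.
Set Implicit Arguments. Unset Strict Implicit. Unset Printing Implicit Defensive.
Import Order.TTheory GRing.Theory Num.Theory.
Local Open Scope ring_scope.

(* Moore--Penrose pseudoinverse, characterized by the four Penrose equations
   (which determine it uniquely). *)
Definition is_MP_pinv (R : realType) (m n : nat)
    (A : 'M[R]_(m, n)) (P : 'M[R]_(n, m)) : Prop :=
  [/\ A *m P *m A = A, P *m A *m P = P,
      (A *m P)^T = A *m P & (P *m A)^T = P *m A].

Definition epow (R : realType) (n : nat) (x : 'cV[R]_n) (k : nat) : 'cV[R]_n :=
  map_mx (fun a => a ^+ k) x.

(* gradient of  L(x) = 1/(2L) ||A x^{⊙L} - b||^2 :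
   [A^T (A x^{⊙L} - b)] ⊙ x^{⊙(L-1)} *)
Definition gradL (R : realType) (m n L : nat)
    (A : 'M[R]_(m, n)) (b : 'cV[R]_m) (x : 'cV[R]_n) : 'cV[R]_n :=
  \col_i ((A^T *m (A *m epow x L - b)) i 0 * x i 0 ^+ (L - 1)).

Definition hvec (R : realType) (n L : nat) (x : 'cV[R]_n) : 'cV[R]_n :=
  if L == 2%N then map_mx (@ln R) x
  else map_mx (fun a => a ^ (2%:Z - L%:Z)) x.

(* Main.v *)
Require Import Defs.
From HB Require Import structures.
From mathcomp Require Import all_boot all_order all_algebra.
From mathcomp Require Import all_classical all_reals all_analysis.
From mathcomp Require Import ring lra zify.
Import Order.TTheory GRing.Theory Num.Theory numFieldNormedType.Exports.
Local Open Scope ring_scope.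
Local Open Scope classical_set_scope.

Definition gf (R : realType) (L : nat) (a : R) : R :=
  if L == 2%N then ln a else a ^ (2%:Z - L%:Z).
Arguments gf {R} L a.
Definition kk (R : realType) (L : nat) : R :=
  if L == 2%N then 1 else (2%:Z - L%:Z)%:~R.

Lemma g_deriv (R : realType) (L : nat) (a : R) : (0 < L)%N -> 0 < a ->
  exists2 d, is_derive a 1 (gf L) d & d * a ^+ (L - 1) = kk R L.
Proof.
move=> L0 a0; rewrite /gf /kk.
case: eqP => [->|L2].
  exists a^-1; first exact: is_derive1_ln.
  by rewrite subSS subn0 expr1 mulVf // gt_eqF.
case: L L0 L2 => [//|[|n]] _ L2.
  have -> : (fun a : R => a ^ (2%:Z - 1%:Z)) = id.
    by apply/funext => y /=; rewrite (_ : 2%:Z - 1%:Z = 1) // expr1z.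
  exists 1; first exact: is_derive_id.
  by rewrite subnn expr0 mulr1.
case: n L2 => [//|n] _.
have -> : (fun a : R => a ^ (2%:Z - n.+3%:Z)) = (fun a => (a ^+ n.+1)^-1).
  apply/funext => y /=; rewrite (_ : 2%:Z - n.+3%:Z = - (n.+1)%:Z); last by lia.
  by rewrite -exprnN.
have hX : is_derive a 1 (@GRing.exp R ^~ n.+1) (n.+1%:R *: a ^+ n *: 1).
  by apply: DeriveDef; [exact: exprn_derivable | rewrite exp_derive].
have an0 : a ^+ n != 0 by rewrite expf_neq0 // gt_eqF.
have a0' : a != 0 by rewrite gt_eqF.
have an1 : (@GRing.exp R ^~ n.+1) a != 0 by rewrite /= expf_neq0.
eexists; first exact: (@is_deriveV R (fun y => y ^+ n.+1) a _ 1 an1 hX).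
rewrite (_ : 2%:Z - n.+3%:Z = - (n.+1)%:Z); last by lia.
rewrite /= subSS subn0 !exprS -!mulrA mulr1 /=.
rewrite rmorphN /= pmulrn.
field.
by rewrite an0 a0'.
Qed.

Lemma hvecE (R : realType) (n L : nat) (x : 'cV[R]_n) i :
  hvec L x i 0 = gf L (x i 0).
Proof. by rewrite /hvec /gf; case: eqP => _; rewrite mxE. Qed.

Lemma PAt (R : realType) (M N : nat) (A : 'M[R]_(M, N)) (Adag : 'M[R]_(N, M)) :
  is_MP_pinv A Adag -> (1%:M - Adag *m A) *m A^T = 0.
Proof.
case=> h1 _ _ h4.
have PT : (1%:M - Adag *m A)^T = 1%:M - Adag *m A.
  by rewrite linearB /= trmx1 h4.
have AP : A *m (1%:M - Adag *m A) = 0.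
  by rewrite mulmxBr mulmx1 mulmxA h1 subrr.
by rewrite -{1}PT -trmx_mul AP trmx0.
Qed.

Lemma cont_sum (R : realType) (T : topologicalType) n (g : 'I_n -> T -> R) :
  (forall i, continuous (g i)) -> continuous (fun t => \sum_(i < n) g i t).
Proof.
elim: n g => [|n IH] g hg.
  under eq_fun do rewrite big_ord0. exact: cst_continuous.
under eq_fun do rewrite big_ord_recr /=.
move=> s; apply: continuousD; last exact: hg.
exact: (IH (fun i => g (widen_ord (leqnSn n) i))) => i; exact: hg.
Qed.

Theorem mainTheorem9 (R : realType) (M N L : nat)
    (A : 'M[R]_(M, N)) (b : 'cV[R]_M) (Adag : 'M[R]_(N, M))
    (x : R -> 'cV[R]_N) :
  (0 < L)%N ->
  is_MP_pinv A Adag ->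
  (* gradient flow  d/dt x = - grad L(x)  for t > 0, continuous on [0, oo) *)
  (forall i : 'I_N, {within [set t : R | 0 <= t], continuous (fun t => x t i 0)}) ->
  (forall (t : R) (i : 'I_N), 0 < t ->
     is_derive t 1 (fun s => x s i 0) (- gradL L A b (x t) i 0)) ->
  (* positivity of x(0) and of x(t) for all t >= 0 *)
  (forall t : R, 0 <= t -> forall i : 'I_N, 0 < x t i 0) ->
  forall t : R, 0 <= t ->
    (1%:M - Adag *m A) *m hvec L (x t) = (1%:M - Adag *m A) *m hvec L (x 0).
Proof.
move=> L0 MP cx dx pos t t0.
set P := 1%:M - Adag *m A.
set G := fun s => A^T *m (A *m epow (x s) L - b).
apply/matrixP => j k; rewrite (ord1 k).
set f := fun s => (P *m hvec L (x s)) j 0.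
have fE : f = \sum_(i < N) (fun s => P j i * gf L (x s i 0)).
  apply/funext => s; rewrite /f mxE fct_sumE.
  by apply: eq_bigr => i _; rewrite hvecE.
have hder (s : R) (i : 'I_N) : 0 < s ->
    is_derive s 1 (fun s => gf L (x s i 0)) (- kk R L * G s i 0).
  move=> s0.
  have [d hd hdk] := @g_deriv R L _ L0 (pos s (ltW s0) i).
  have := is_derive1_comp hd (dx s i s0).
  rewrite /gradL mxE => H; refine (is_derive_eq H _).
  by rewrite mulrN mulrCA hdk mulNr mulrC.
have fder (s : R) : 0 < s -> is_derive s 1 f 0.
  move=> s0; rewrite fE.
  have hi (i : 'I_N) : is_derive s 1 (fun s => P j i * gf L (x s i 0))
      (P j i * (- kk R L * G s i 0)).
    exact: (is_deriveZ (P j i) (hder s i s0)).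
  have hs := is_derive_sum hi.
  suff <- : \sum_(i < N) (P j i * (- kk R L * G s i 0)) = 0 by exact: hs.
  have : (P *m G s) j 0 = 0 by rewrite /G mulmxA PAt // mul0mx mxE.
  rewrite mxE => hz.
  rewrite (eq_bigr (fun i => - kk R L * (P j i * G s i 0))); last first.
    by move=> i _; rewrite mulrCA.
  by rewrite -mulr_sumr hz mulr0.
have fcont : {within [set s : R | 0 <= s], continuous f}.
  rewrite fE fct_sumE.
  apply: (@cont_sum R (subspace [set s : R | 0 <= s]) N) => i.
  apply: (@within_continuous_comp _ _ _ [set s : R | 0 <= s]
           (fun s => x s i 0) (fun a => P j i * gf L a)); last exact: cx.
  move=> y; rewrite inE => -[s /= s0 <-].
  have [d hd _] := @g_deriv R L _ L0 (pos s s0 i).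
  have := is_deriveZ (P j i) hd => -[/derivable1_diffP dd _].
  exact: differentiable_continuous dd.
have h1 : forall s, s \in `]0, t[%R -> is_derive s 1 f ((fun _ => 0) s).
  move=> s; rewrite in_itv /= => /andP[s0 _]; exact: fder.
have h2 : {within `[0, t], continuous f}.
  apply: continuous_subspaceW fcont => s /=; rewrite in_itv /= => /andP[].
  done.
have [c _] := MVT_segment t0 h1 h2.
by rewrite mul0r => /eqP; rewrite subr_eq0 => /eqP.
Qed.
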